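(* If $H$ is a finite group with $H\ne1$, then $h^*(H^{\mathfrak{N}^*})=h^*(H)-1$.
   Context: $\mathfrak{N}^*$ is the formation of quasinilpotent groups and $H^{\mathfrak{N}^*}$ is the smallest normal subgroup of $H$ with quasinilpotent quotient. $h^*(G)$ is the generalized Fitting height: $\mathrm{F}^*_{(0)}(G)=1$, $\mathrm{F}^*_{(i+1)}(G)$ the full preimage of $\mathrm{F}^*(G/\mathrm{F}^*_{(i)}(G))$ where $\mathrm{F}^*$ is the generalized Fitting subgroup; $h^*(G)$ is the least $h$ with $\mathrm{F}^*_{(h)}(G)=G$. *)

(* Defs.v *)
From mathcomp Require Import all_boot all_fingroup all_solvable.
Set Implicit Arguments. Unset Strict Implicit. Unset Printing Implicit Defensive.
Import GroupScope.
Local Open Scope group_scope.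


Definition quasisimple {gT : finGroupType} (A : {set gT}) : bool := ([~: A, A] == A) && simple (A / 'Z(A)).

Definition component {gT : finGroupType} (K : {group gT}) (A : {set gT}) : bool := (K <|<| A) && quasisimple K.

Definition layer {gT : finGroupType} (A : {set gT}) : {set gT} := << \bigcup_(K : {group gT} | component K A) K >>.

Definition Fstar {gT : finGroupType} (A : {set gT}) : {set gT} := 'F(A) <*> layer A.

Definition quasinilpotent {gT : finGroupType} (A : {set gT}) : bool := Fstar A == A.

Definition Fstar_series {gT : finGroupType} (G : {set gT}) (i : nat) : {set gT} :=
  iter i (fun X => coset X @*^-1 Fstar (G / X)) 1.

(* generalized Fitting height: least h with F*_(h)(G) = G
   (such h exists and is at most #|G|, the series being strictly increasing) *)
Definition hstar {gT : finGroupType} (G : {set gT}) : nat :=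
  find (fun i => Fstar_series G i == G) (iota 0 #|G|.+1).

(* quasinilpotent residual H^{N*}: smallest normal subgroup with quasinilpotent
   quotient, i.e. the intersection of all such normal subgroups *)
Definition qn_residual {gT : finGroupType} (H : {set gT}) : {set gT} :=
  \bigcap_(N : {group gT} | (N <| H) && quasinilpotent (H / N)) N.

(* Main.v *)
Require Import Defs.
From mathcomp Require Import all_boot all_fingroup all_solvable.
Import GroupScope.
Local Open Scope group_scope.
Set Implicit Arguments. Unset Strict Implicit. Unset Printing Implicit Defensive.

Section Basic.
Variable gT : finGroupType.
Implicit Types G H K L M N X Y : {group gT}.

Lemma perfect_nil1 K : nilpotent K -> [~: K, K] = K -> K :=: 1.
Proof.
move=> nilK pK; apply/eqP; apply/negPn/negP => ntK.
have := nil_comm_properl nilK (subxx K) ntK (A := K).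
by rewrite subsetI subxx normG pK properE subxx => /(_ isT).
Qed.

Lemma qs_ntriv K : quasisimple K -> K :!=: 1.
Proof.
case/andP=> _ /simpleP[ntq _]; apply: contra ntq => /eqP K1.
by rewrite -subG1 quotient_sub1 ?normal_norm ?center_normal // K1 sub1G.
Qed.

Lemma qs_perfect K : quasisimple K -> [~: K, K] = K.
Proof. by case/andP=> /eqP. Qed.

Lemma qs_normal K M : quasisimple K -> M <| K -> ~~ (M \subset 'Z(K)) -> M :=: K.
Proof.
move=> qsK nsMK nZ; have [sMK nMK] := andP nsMK.
have [_ /simpleP[_ simq]] := andP qsK.
have nZK : K \subset 'N('Z(K)) by rewrite normal_norm ?center_normal.
have nZM : M \subset 'N('Z(K)) := subset_trans sMK nZK.
have : M / 'Z(K) <| K / 'Z(K) by rewrite quotient_normal.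
case/simq => [/eqP | defq].
  by rewrite -subG1 quotient_sub1 // (negPf nZ).
apply/eqP; rewrite eqEsubset sMK /=.
have nZMg : M \subset 'N('Z(K)) := nZM.
have sKMZ : K \subset 'Z(K) * M.
  rewrite -quotientK // -[M / _]/(gval (M / 'Z(K))%G) defq /=.
  by rewrite -sub_morphim_pre.
rewrite -(qs_perfect qsK) -/(K^`(1)) der1_min //.
apply: abelianS (quotientS M sKMZ) _.
by rewrite quotientMidr quotient_abelian ?center_abelian.
Qed.


Lemma qsP K : K :!=: 1 -> [~: K, K] = K ->
  (forall M : {group gT}, M <| K -> M :!=: K -> M \subset 'Z(K)) -> quasisimple K.
Proof.
move=> ntK pK hM; apply/andP; split; first by rewrite pK.
have nZK : K \subset 'N('Z(K)) by rewrite normal_norm ?center_normal.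
apply/simpleP; split.
  apply: contra ntK; rewrite -subG1 quotient_sub1 // => sKZ.
  have: abelian K by apply: abelianS sKZ (center_abelian K).
  by move/commG1P; rewrite pK => ->.
move=> Hb nsHb.
have [M defHb sZM nsMK] := inv_quotientN (center_normal K) nsHb.
have [eqMK | neMK] := eqVneq (M : {set gT}) K; first by right; rewrite defHb eqMK.
left; rewrite defHb; apply/trivgP.
by rewrite quotient_sub1 ?hM // (subset_trans (normal_sub nsMK)).
Qed.

Lemma comm_kill K N X : [~: K, K] = K -> [~: K, N] \subset X -> X \subset 'C(K) ->
  N \subset 'C(K).
Proof.
move=> pK sKNX cXK.
have h1 : [~: K, N, K] :=: 1.
  by apply/commG1P; apply: subset_trans sKNX cXK.
have h2 : [~: N, K, K] :=: 1 by rewrite (commGC N K).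
have := three_subgroup h1 h2. rewrite pK => /commG1P.
by rewrite centsC.
Qed.


Lemma qs_sn_normal K G N : quasisimple K -> K <|<| G -> N <| G ->
  K \subset N \/ N \subset 'C(K).
Proof.
move=> qsK; have pK := qs_perfect qsK.
have [n] := ubnP #|G|; elim: n G N => // n IHn G N /ltnSE leGn snKG nsNG.
have sKG := subnormal_sub snKG.
have [sNG nNG] := andP nsNG.
case: (subnormalEr snKG) => [defK | [M [snKM nsMG ltMG]]].
- have nsKNK : K :&: N <| K := normalGI sKG nsNG.
  have [sKNZ | nsZ] := boolP (K :&: N \subset 'Z(K)).
  + right; apply: comm_kill pK _ (subset_trans sKNZ (subsetIr _ _)).
    apply: commg_subI; first by rewrite subsetI subxx (subset_trans sKG).
    by rewrite subsetI subxx defK (subset_trans sNG) ?normG.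
  + left; have eq := qs_normal qsK nsKNK nsZ.
    by rewrite -eq subsetIr.
- have sMG := proper_sub ltMG.
  have nsMNM : M :&: N <| M := normalGI sMG nsNG.
  have ltM : #|M| < n := leq_trans (proper_card ltMG) leGn.
  case: (IHn M _ ltM snKM nsMNM) => [sKMN | cK].
    by left; apply: subset_trans sKMN (subsetIr M N).
  right; apply: comm_kill pK _ cK.
  apply: commg_subI.
    by rewrite subsetI (subnormal_sub snKM) (subset_trans sKG).
  by rewrite subsetI subxx (subset_trans sNG) ?normal_norm.
Qed.

End Basic.

Section Layer.
Variable gT : finGroupType.
Implicit Types G H K L M N X Y : {group gT}.

Lemma layer_group_set (A : {set gT}) : group_set (layer A).
Proof. exact: groupP. Qed.
Canonical layer_group (A : {set gT}) := Group (layer_group_set A).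

Lemma Fstar_group_set (A : {set gT}) : group_set (Fstar A).
Proof. exact: groupP. Qed.
Canonical Fstar_group (A : {set gT}) := Group (Fstar_group_set A).

Lemma comp_sub K G : component K G -> K \subset G.
Proof. by case/andP=> /subnormal_sub. Qed.

Lemma comp_layer K G : component K G -> K \subset layer G.
Proof. by move=> cK; rewrite /layer sub_gen // (bigcup_sup K). Qed.

Lemma layer_min G X : (forall K, component K G -> K \subset X) -> layer G \subset X.
Proof. by move=> h; rewrite /layer gen_subG; apply/bigcupsP. Qed.

Lemma layer_sub G : layer G \subset G.
Proof. by apply: layer_min => K /comp_sub. Qed.

Lemma Fitting_Fstar G : 'F(G) \subset Fstar G.
Proof. exact: joing_subl. Qed.

Lemma layer_Fstar G : layer G \subset Fstar G.
Proof. exact: joing_subr. Qed.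

Lemma Fstar_min G X : 'F(G) \subset X -> layer G \subset X -> Fstar G \subset X.
Proof. by move=> h1 h2; rewrite /Fstar join_subG h1. Qed.

Lemma Fstar_sub G : Fstar G \subset G.
Proof. by rewrite Fstar_min ?Fitting_sub ?layer_sub. Qed.

End Layer.

Section Morph.
Variables (aT rT : finGroupType) (D : {group aT}) (f : {morphism D >-> rT}).
Implicit Types G H K L M N X Y : {group aT}.

Lemma morphim_qs K : K \subset D -> quasisimple K ->
  f @* K :=: 1 \/ quasisimple (f @* K).
Proof.
move=> sKD qsK; have [-> | ntfK] := eqVneq (f @* K) 1; [by left | right].
apply: qsP => //; first by rewrite -morphimR // qs_perfect.
move=> Mb nsMb neMb.
have sMbD : Mb \subset f @* D := subset_trans (normal_sub nsMb) (morphimS f sKD).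
have sKpre : K \subset f @*^-1 (f @* K) by rewrite -sub_morphim_pre.
have nsPre : f @*^-1 Mb <| f @*^-1 (f @* K).
  by rewrite morphpre_normal ?morphimS.
have nsM : K :&: f @*^-1 Mb <| K := normalGI sKpre nsPre.
have defMb : f @* (K :&: f @*^-1 Mb) = Mb.
  by rewrite morphim_setIpre; apply/setIidPr; apply: normal_sub.
have [sMZ | nsZ] := boolP (K :&: f @*^-1 Mb \subset 'Z(K)).
  rewrite -defMb; apply: subset_trans (morphimS f sMZ) _.
  exact: morphim_center.
have eqM := qs_normal qsK nsM nsZ.
by move: neMb; rewrite -defMb eqM eqxx.
Qed.

Lemma morphim_component K G : component K G -> G \subset D ->
  f @* K :=: 1 \/ component (f @* K)%G (f @* G).
Proof.
case/andP=> snKG qsK sGD.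
have sKD := subset_trans (subnormal_sub snKG) sGD.
case: (morphim_qs sKD qsK) => [-> | qsfK]; [by left | right].
by rewrite /component qsfK andbT morphim_subnormal.
Qed.

Lemma morphim_layer G : G \subset D -> f @* layer G \subset layer (f @* G).
Proof.
move=> sGD; rewrite (sub_morphim_pre f _ (subset_trans (layer_sub G) sGD)).
apply: (@layer_min _ G (f @*^-1 (layer (f @* G)))%G) => K cK.
rewrite -sub_morphim_pre ?(subset_trans (comp_sub cK)) //.
case: (morphim_component cK sGD) => [-> | cfK]; first exact: sub1G.
exact: comp_layer cfK.
Qed.

Lemma morphim_Fstar G : G \subset D -> f @* Fstar G \subset Fstar (f @* G).
Proof.
move=> sGD; rewrite (sub_morphim_pre f _ (subset_trans (Fstar_sub G) sGD)).
apply: Fstar_min.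
  rewrite -sub_morphim_pre ?(subset_trans (Fitting_sub G)) //.
  exact: subset_trans (morphim_Fitting G f) (Fitting_Fstar _).
rewrite -sub_morphim_pre ?(subset_trans (layer_sub G)) //.
exact: subset_trans (morphim_layer sGD) (layer_Fstar _).
Qed.

End Morph.

Section Morph2.
Variables (aT rT : finGroupType) (D : {group aT}) (f : {morphism D >-> rT}).
Implicit Types G H K L M N X Y : {group aT}.

Lemma injm_Fstar G : 'injm f -> G \subset D -> f @* Fstar G = Fstar (f @* G).
Proof.
move=> injf sGD; apply/eqP; rewrite eqEsubset morphim_Fstar //=.
have sFD : Fstar (f @* G) \subset f @* D.
  exact: subset_trans (Fstar_sub _) (morphimS f sGD).
rewrite -(injmSK (injm_invm injf)) // morphim_invm ?(subset_trans (Fstar_sub G)) //.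
have := morphim_Fstar (invm injf) (morphimS f sGD).
by rewrite /= morphim_invm.
Qed.

Lemma injm_qn G : 'injm f -> G \subset D -> quasinilpotent (f @* G) = quasinilpotent G.
Proof.
move=> injf sGD; rewrite /quasinilpotent -injm_Fstar //.
by rewrite !eqEsubset !injmSK ?(subset_trans (Fstar_sub G)).
Qed.

Lemma morphim_qn G : G \subset D -> quasinilpotent G -> quasinilpotent (f @* G).
Proof.
move=> sGD /eqP qG; rewrite /quasinilpotent eqEsubset Fstar_sub /=.
by rewrite -{1}qG morphim_Fstar.
Qed.

End Morph2.

Section Normal.
Variable gT : finGroupType.
Implicit Types G H K L M N X Y : {group gT}.

Lemma Fstar_normal G : Fstar G <| G.
Proof.
rewrite /normal Fstar_sub; apply/normsP => x Gx.
have := injm_Fstar (injm_conj G x) (subxx G).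
by rewrite !morphim_conj setIid (setIidPr (Fstar_sub G)) conjGid.
Qed.


Lemma nil_central_ext H (E : {group gT}) : H \subset 'N(E) -> nilpotent (H / E) ->
  H :&: E \subset 'Z(H) -> nilpotent H.
Proof.
move=> nEH /lcnP[n Ln] sZ; apply/lcnP; exists n.+1.
have sLE : 'L_n.+1(H) \subset E.
  rewrite -(quotient_sub1 (subset_trans (lcn_sub _ _) nEH)).
  by rewrite /quotient morphim_lcn // -/(quotient H E) Ln.
rewrite lcnSn; apply/commG1P.
have sLZ : 'L_n.+1(H) \subset 'Z(H) by rewrite (subset_trans _ sZ) // subsetI lcn_sub.
by apply: subset_trans sLZ _; rewrite /center subsetIr.
Qed.

Lemma subnormal_nil_Fitting L G : nilpotent L -> L <|<| G -> L \subset 'F(G).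
Proof.
move=> nilL; have [n] := ubnP #|G|; elim: n G => // n IHn G /ltnSE leGn snLG.
case: (subnormalEr snLG) => [defL | [K [snLK nsKG ltKG]]].
  by rewrite Fitting_max // /normal defL subxx normG.
have ltK : #|K| < n := leq_trans (proper_card ltKG) leGn.
apply: subset_trans (IHn K ltK snLK) _.
by rewrite Fitting_max ?Fitting_nil // (char_normal_trans (Fitting_char K)).
Qed.

Lemma Fstar_sub_normal N G : N <| G -> Fstar N \subset Fstar G.
Proof.
move=> nsNG; apply: Fstar_min.
  apply: subset_trans (Fitting_Fstar G).
  by rewrite Fitting_max ?Fitting_nil // (char_normal_trans (Fitting_char N)).
apply: subset_trans (layer_Fstar G).
apply: layer_min => K /andP[snKN qsK]; apply: comp_layer.
by rewrite /component qsK (subnormal_trans snKN) ?normal_subnormal.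
Qed.

Lemma Fstar_normalI N G : N <| G -> Fstar N = Fstar G :&: N.
Proof.
move=> nsNG; have [sNG nNG] := andP nsNG.
apply/eqP; rewrite eqEsubset subsetI Fstar_sub_normal // Fstar_sub /=.
pose C := 'C_G(N)%G.
have nsCG : C <| G.
  by have := subcent_normal G N; rewrite /= (setIidPl nNG).
pose W := ('F(G) <*> C)%G.
have nsWG : W <| G by rewrite normalY ?Fitting_normal.
have sLN : layer N \subset N := layer_sub N.
have nWL : layer N \subset 'N(W) := subset_trans (subset_trans sLN sNG) (normal_norm nsWG).
have sEG : layer G \subset layer N <*> C.
  apply: layer_min => K cK; have /andP[snKG qsK] := cK.
  case: (qs_sn_normal qsK snKG nsNG) => [sKN | cNK].
    apply: subset_trans (joing_subl _ _); apply: comp_layer.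
    have := setI_subnormal sNG snKG; rewrite (setIidPl sKN) => snKN.
    by rewrite /component snKN qsK.
  apply: subset_trans (joing_subr _ _).
  by rewrite subsetI (comp_sub cK) centsC.
have sFstar : Fstar G \subset layer N * W.
  rewrite -(norm_joinEl nWL); apply: Fstar_min.
    by apply: subset_trans (joing_subr _ _); apply: joing_subl.
  apply: subset_trans sEG _; rewrite join_subG joing_subl /=.
  by apply: subset_trans (joing_subr _ _); apply: joing_subr.
have sWNF : W :&: N \subset 'F(N).
  apply: Fitting_max.
    by apply: normalS (subsetIr _ _) sNG (normalI nsWG nsNG).
  have nCWN : W :&: N \subset 'N(C).
    exact: subset_trans (subsetIr _ _) (subset_trans sNG (normal_norm nsCG)).
  apply: nil_central_ext nCWN _ _.
    apply: nilpotentS (quotientS _ (subsetIl _ _)) _.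
    rewrite /W /= norm_joinEr ?(subset_trans (normal_sub nsCG)) ?normal_norm ?Fitting_normal //.
    by rewrite quotientMidr quotient_nil ?Fitting_nil.
  rewrite /center subsetI subsetIl /=.
  apply: subset_trans (subsetIr _ _) _.
  by apply: subset_trans (subsetIr G 'C(N)) _; apply: centS; apply: subsetIr.
apply: subset_trans (setSI N sFstar) _.
rewrite -group_modl // mul_subG ?layer_Fstar //.
exact: subset_trans sWNF (Fitting_Fstar N).
Qed.

Lemma qn_Fstar_sub (Q : {group gT}) N : Q <| N -> quasinilpotent Q -> Q \subset Fstar N.
Proof. by move=> nsQN /eqP qQ; apply: subset_trans _ (Fstar_sub_normal nsQN); rewrite qQ. Qed.

Lemma qn_normal N G : quasinilpotent G -> N <| G -> quasinilpotent N.
Proof.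
move=> /eqP qG nsNG; rewrite /quasinilpotent (Fstar_normalI nsNG) qG.
by rewrite (setIidPr (normal_sub nsNG)).
Qed.

Lemma layer_cent_Fitting G : layer G \subset 'C('F(G)).
Proof.
apply: layer_min => K cK; have /andP[snKG qsK] := cK.
case: (qs_sn_normal qsK snKG (Fitting_normal G)) => [sKF | cFK].
  have nilK := nilpotentS sKF (Fitting_nil G).
  by have := qs_ntriv qsK; rewrite (perfect_nil1 nilK (qs_perfect qsK)) eqxx.
by rewrite centsC.
Qed.

Lemma Fstar_ntriv G : G :!=: 1 -> Fstar G :!=: 1.
Proof.
move=> ntG.
have [L minL] : {L : {group gT} | mingroup L [pred X : {group gT} | (X :!=: 1) && (X <|<| G)]}.
  by apply: ex_mingroup; exists G; rewrite /= ntG subnormal_refl.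
have [/andP[ntL snLG] minLP] := mingroupP minL.
have simL : forall Y : {group gT}, Y <| L -> Y :=: 1 \/ Y :=: L.
  move=> Y nsYL; have [-> | ntY] := eqVneq (Y : {set gT}) 1; first by left.
  right; apply: minLP (normal_sub nsYL).
  by rewrite /= ntY (subnormal_trans (normal_subnormal nsYL)).
suff sLF : L \subset Fstar G.
  by apply: contra ntL => /eqP F1; rewrite -subG1 -F1.
have [abL | nabL] := boolP (abelian L).
  exact: subset_trans (subnormal_nil_Fitting (abelian_nil abL) snLG) (Fitting_Fstar G).
apply: subset_trans (layer_Fstar G); apply: comp_layer.
rewrite /component snLG /=.
have pL : [~: L, L] = L.
  case: (simL _ (der_normal 1 L)); rewrite /= derg1 //.
  by move/commG1P => abL; case/negP: nabL.
apply: qsP => // Y nsYL neYL.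
case: (simL Y nsYL) => [-> | eqYL]; first exact: sub1G.
by rewrite eqYL eqxx in neYL.
Qed.

End Normal.

Section Quo.
Variable gT : finGroupType.
Implicit Types G H K L M N X Y : {group gT}.

Lemma qn1 : quasinilpotent [1 gT].
Proof. by rewrite /quasinilpotent eqEsubset Fstar_sub sub1G. Qed.

Lemma qn_quo_mono G N X : N \subset X -> N <| G -> X <| G ->
  quasinilpotent (G / N) -> quasinilpotent (G / X).
Proof.
move=> sNX nsNG nsXG qGN.
have [f injf imf] := third_isom sNX nsNG nsXG.
rewrite -(imf G (subxx G)) injm_qn //.
apply: morphim_qn qGN.
by rewrite normal_norm ?quotient_normal.
Qed.

Lemma cosetpre_subnormal M (A B : {group coset_of M}) :
  A <|<| B -> coset M @*^-1 A <|<| coset M @*^-1 B.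
Proof.
case/subnormalP => s Hs <-{B}; apply/subnormalP.
elim: s A Hs => [|C s IHs] A /=; first by exists [::].
case/andP => nsAC /IHs[t Ht <-].
by exists ((coset M @*^-1 C)%G :: t); rewrite /= ?cosetpre_normal ?nsAC.
Qed.

Lemma comm_mulc M (A B : {group gT}) : A \subset 'C(M) -> B \subset 'C(M) -> M \subset 'C(M) ->
  [~: M * A, M * B] = [~: A, B].
Proof.
move=> cMA cMB cMM.
have e1 (K : {group gT}) (C : {group gT}) : C \subset 'C(M) -> K \subset 'C(M) ->
    [~: M * C, K] = [~: C, K].
  move=> cMC cMK; have cMK1 : [~: M, K] = 1 by apply/commG1P; rewrite centsC.
  by rewrite commMG cMK1 ?norms1 ?mul1g.
rewrite -(norm_joinEr (cents_norm cMB)) e1 //; last by rewrite join_subG cMM.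
by rewrite commGC /= norm_joinEr ?(cents_norm cMB) // e1 // commGC.
Qed.


Lemma qn_central_lift G M : M <| G -> G \subset 'C(M) ->
  quasinilpotent (G / M) -> quasinilpotent G.
Proof.
move=> nsMG cMG qGM; have [sMG nMG] := andP nsMG.
have cMM : M \subset 'C(M) := subset_trans sMG cMG.
have sMQ : M \subset Fstar G.
  exact: subset_trans (Fitting_max nsMG (abelian_nil cMM)) (Fitting_Fstar G).
rewrite /quasinilpotent eqEsubset Fstar_sub /=.
rewrite -(quotientSGK nMG sMQ) -{1}(eqP qGM).
apply: Fstar_min.
  pose P := (coset M @*^-1 'F(G / M))%G.
  have nsPG : P <| G.
    by rewrite -{1}(quotientGK nsMG) cosetpre_normal Fitting_normal.
  have sPG := normal_sub nsPG.
  have nilP : nilpotent P.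
    apply: nil_central_ext (subset_trans sPG nMG) _ _.
      by rewrite cosetpreK Fitting_nil.
    rewrite /center subsetI subsetIl /=.
    apply: subset_trans (subsetIr _ _) _.
    by rewrite centsC (subset_trans sPG cMG).
  rewrite -(cosetpreK 'F(G / M)) -/(gval P) quotientS //.
  exact: subset_trans (Fitting_max nsPG nilP) (Fitting_Fstar G).
apply: layer_min => Kb cKb; have /andP[snKb qsKb] := cKb.
pose Kh := (coset M @*^-1 Kb)%G.
have snKh : Kh <|<| G.
  by rewrite -(quotientGK nsMG); apply: cosetpre_subnormal.
have sKhG := subnormal_sub snKh.
have nMKh : Kh \subset 'N(M) := subset_trans sKhG nMG.
pose L := [~: Kh, Kh]%G.
have sLKh : L \subset Kh := der1_subG Kh.
have sLG := subset_trans sLKh sKhG.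
have nML := subset_trans sLG nMG.
have cML : L \subset 'C(M) := subset_trans sLG cMG.
have snL : L <|<| G.
  apply: subnormal_trans snKh; apply: normal_subnormal.
  by rewrite /L /= -derg1 der_normal.
have defLb : L / M = Kb by rewrite quotientR // cosetpreK qs_perfect.
have defKh : Kh :=: M * L by rewrite -quotientK // defLb.
have pL : [~: L, L] = L.
  have eL : gval L = [~: Kh, Kh] by [].
  by rewrite {3}eL defKh comm_mulc.
have ntL : L :!=: 1.
  apply: contra (qs_ntriv qsKb) => /eqP L1.
  by rewrite -defLb L1 quotient1.
have qsL : quasisimple L.
  apply: qsP => // X nsXL neXL.
  have [sXL nXL] := andP nsXL.
  have nMX := subset_trans sXL nML.
  have nsXb : X / M <| Kb by rewrite -defLb quotient_normal.
  have [sXZ | nsZ] := boolP (X / M \subset 'Z(Kb)).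
    have sXLM : [~: X, L] \subset M.
      rewrite -quotient_cents2 // defLb.
      by apply: subset_trans sXZ _; rewrite /center subsetIr.
    have cXL : X \subset 'C(L).
      apply: (@comm_kill _ L X M pL); first by rewrite commGC.
      by rewrite centsC.
    by rewrite /center subsetI sXL.
  have eqXb := qs_normal qsKb nsXb nsZ.
  have sLMX : L \subset M * X.
    rewrite -quotientK // eqXb -defLb.
    by rewrite -sub_morphim_pre.
  have sLX : L \subset X.
    rewrite -pL; apply: subset_trans (commgSS sLMX sLMX) _.
    rewrite comm_mulc ?(subset_trans sXL cML) //.
    by rewrite commg_subl normG.
  by move: neXL; rewrite eqEsubset sXL sLX.
have cL : component L G by rewrite /component snL qsL.
rewrite -defLb quotientS //.
exact: subset_trans (comp_layer cL) (layer_Fstar G).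
Qed.


Lemma qn_iso_quo G N : G \subset 'N(N) -> N :&: G = 1 ->
  quasinilpotent (G / N) -> quasinilpotent G.
Proof.
move=> nNG tiNG qGN.
have [injf imf] := isomP (quotient_isom nNG tiNG).
by rewrite -(injm_qn injf (subxx G)) imf.
Qed.

Lemma qn_minnormal_lift G M N :
  M <| G -> M :!=: 1 ->
  (forall Y : {group gT}, Y <| G -> Y \subset M -> Y :=: 1 \/ Y :=: M) ->
  quasinilpotent (G / M) -> N <| G -> M :&: N = 1 -> quasinilpotent (G / N) ->
  quasinilpotent G.
Proof.
move=> nsMG ntM minM qGM nsNG tiMN qGN.
have [sMG nMG] := andP nsMG; have [sNG nNG] := andP nsNG.
have [cMG | ncMG] := boolP (G \subset 'C(M)); first exact: qn_central_lift nsMG cMG qGM.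
have cNM : N \subset 'C(M).
  apply/commG1P/trivgP; rewrite -tiMN setIC.
  by apply: commg_subI; rewrite subsetI subxx ?(subset_trans sNG nMG) ?(subset_trans sMG nNG).
have nNM := subset_trans sMG nNG.
have ntMb : M / N != 1.
  apply: contra ntM => /eqP MN1; apply/eqP.
  have sMN : M \subset N by rewrite -quotient_sub1 // MN1.
  by rewrite -tiMN (setIidPl sMN).
have [abM | nabM] := boolP (abelian M).
  have nsRG : [~: M, G] <| G.
    by rewrite /normal (subset_trans _ sMG) ?commg_subl // normsR ?normG.
  case: (minM _ nsRG); first by rewrite commg_subl.
    by move/commG1P; rewrite centsC (negPf ncMG).
  move=> RM; have RM' : [~: M, G] = M by exact: RM.
  exfalso.
  pose D := (G / N)%G; pose Mb := (M / N)%G.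
  have nsMbD : Mb <| D by rewrite quotient_normal.
  have sMbF : Mb \subset 'F(D).
    by rewrite Fitting_max ?abelian_nil ?quotient_abelian.
  have nFL : layer D \subset 'N('F(D)).
    exact: subset_trans (layer_sub D) (normal_norm (Fitting_normal D)).
  have defD : 'F(D) * layer D = D.
    by rewrite -norm_joinEr //; exact: (eqP qGN).
  have cLMb : layer D \subset 'C(Mb).
    exact: subset_trans (layer_cent_Fitting D) (centS sMbF).
  have eMb : [~: 'F(D), Mb] = Mb.
    have e1 : [~: gval Mb, gval D] = Mb by rewrite /Mb /D /= -quotientR // RM'.
    rewrite -{2}e1 (commGC Mb D).
    have -> : [~: gval D, gval Mb] = [~: 'F(D) * layer D, Mb] by rewrite defD.
    rewrite commMG; last first.
      rewrite normsR // (subset_trans (layer_sub D)) //.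
      exact: normal_norm nsMbD.
    by rewrite (commG1P cLMb) mulg1.
  have := nil_comm_properr (Fitting_nil D) sMbF ntMb (A := 'F(D)).
  rewrite subsetI subxx (subset_trans (Fitting_sub D) (normal_norm nsMbD)) eMb.
  by rewrite properE subxx => /(_ isT).
have Z1 : 'Z(M) = 1.
  have nsZG : 'Z(M) <| G := char_normal_trans (center_char M) nsMG.
  case: (minM _ nsZG (center_sub M)) => // ZM.
  by move: nabM; rewrite -ZM center_abelian.
pose P := (coset N @*^-1 'F(G / N))%G.
have nsPG : P <| G.
  by rewrite -{1}(quotientGK nsNG) cosetpre_normal Fitting_normal.
have sPG := normal_sub nsPG.
have tiMP : M :&: P = 1.
  case: (minM _ (normalI nsMG nsPG) (subsetIl _ _)) => // MP; exfalso.
  have sMP : M \subset P by rewrite -MP subsetIr.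
  have nilM : nilpotent M.
    apply: nil_central_ext nNM _ _.
      apply: nilpotentS (Fitting_nil (G / N)).
      by rewrite -(cosetpreK 'F(G / N)) quotientS.
    by rewrite tiMN sub1G.
  have := TI_center_nil nilM (normal_refl M); rewrite Z1 setIg1 => /(_ erefl) M1.
  by rewrite M1 eqxx in ntM.
have cPM : P \subset 'C(M).
  apply/commG1P/trivgP; rewrite -tiMP setIC.
  by apply: commg_subI; rewrite subsetI subxx ?(subset_trans sPG nMG) ?(subset_trans sMG (normal_norm nsPG)).
pose C := 'C_G(M)%G.
have nsCG : C <| G.
  by have := subcent_normal G M; rewrite /= (setIidPl nMG).
have sCG := normal_sub nsCG.
have nMC : C \subset 'N(M) := subset_trans sCG nMG.
have sNC : N \subset C by rewrite subsetI sNG.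
have tiMC : M :&: C = 1.
  by rewrite /C /= setIA (setIidPl sMG); exact: Z1.
have sGMC : G \subset M * C.
  rewrite -norm_joinEr //.
  rewrite -(quotientSGK nNG (subset_trans sNC (joing_subr _ _))) -{1}(eqP qGN).
  apply: Fstar_min.
    rewrite -(cosetpreK 'F(G / N)) quotientS //.
    by apply: subset_trans (joing_subr _ _); rewrite subsetI sPG.
  apply: layer_min => Kb cKb; have /andP[snKb qsKb] := cKb.
  case: (qs_sn_normal qsKb snKb (quotient_normal N nsMG)) => [sKM | cKM].
    by apply: subset_trans sKM _; rewrite quotientS ?joing_subl.
  pose Y := (coset N @*^-1 Kb)%G.
  have sYG : Y \subset G.
    rewrite -(quotientGK nsNG) morphpreS //.
    exact: subnormal_sub snKb.
  have nNY := subset_trans sYG nNG.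
  have sYMN : [~: Y, M] \subset N.
    by rewrite -quotient_cents2 // cosetpreK centsC.
  have sYMM : [~: Y, M] \subset M by rewrite commg_subr (subset_trans sYG nMG).
  have cYM : Y \subset 'C(M).
    by apply/commG1P/trivgP; rewrite -tiMN subsetI sYMM.
  rewrite -(cosetpreK Kb) quotientS //.
  by apply: subset_trans (joing_subr _ _); rewrite subsetI sYG.
have sMQ : M \subset Fstar G.
  apply: (qn_Fstar_sub nsMG); apply: (qn_iso_quo nNM).
    by rewrite setIC.
  exact: qn_normal qGN (quotient_normal N nsMG).
have sCQ : C \subset Fstar G.
  apply: (qn_Fstar_sub nsCG); apply: (qn_iso_quo nMC tiMC).
  suff <- : G / M = C / M by [].
  apply/eqP; rewrite eqEsubset (quotientS _ sCG) andbT.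
  by rewrite -(quotientMidl M C); apply: quotientS.
rewrite /quasinilpotent eqEsubset Fstar_sub /=.
by apply: subset_trans sGMC _; rewrite mul_subG.
Qed.


End Quo.

Section Quo2.
Variable gT : finGroupType.
Implicit Types G H K L M N X Y : {group gT}.

Lemma qn_third G L X : L \subset X -> L <| G -> X <| G ->
  quasinilpotent (G / X) -> quasinilpotent (G / L / (X / L)).
Proof.
move=> sLX nsLG nsXG qGX.
have [f injf imf] := third_isom sLX nsLG nsXG.
by rewrite -(injm_qn injf (subxx _)) imf.
Qed.

Lemma qn_quo_meet G N1 N2 : N1 <| G -> N2 <| G ->
  quasinilpotent (G / N1) -> quasinilpotent (G / N2) ->
  quasinilpotent (G / (N1 :&: N2)).
Proof.
move=> + nsN2G + qN2; have [sN2G nN2G] := andP nsN2G.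
have [n] := ubnP #|N1|; elim: n N1 => // n IHn N1 /ltnSE leN1 nsN1G qN1.
have [sN1G nN1G] := andP nsN1G.
have [sN12 | nsN12] := boolP (N1 \subset N2); first by rewrite (setIidPl sN12).
pose K := (N1 :&: N2)%G.
have nsKG : K <| G by rewrite normalI.
have [L maxL] : {L : {group gT} |
    maxgroup L [pred Y : {group gT} | [&& Y <| G, K \subset Y & Y \proper N1]]}.
  apply: ex_maxgroup; exists K; rewrite /= nsKG subxx /= properE subsetIl /=.
  by rewrite subsetI subxx.
have [/and3P[nsLG sKL ltLN1] maxLP] := maxgroupP maxL.
have sLN1 := proper_sub ltLN1.
have [sLG nLG] := andP nsLG.
have eqK : L :&: N2 = K.
  apply/eqP; rewrite eqEsubset subsetI sKL subsetIr andbT.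
  by rewrite setSI.
suff qL : quasinilpotent (G / L).
  have ltL : #|L| < n := leq_trans (proper_card ltLN1) leN1.
  by have := IHn L ltL nsLG qL; rewrite eqK.
have nsLN1 : L <| N1 := normalS sLN1 sN1G nsLG.
pose X := (N2 <*> L)%G.
have nsXG : X <| G by rewrite normalY.
have defN2b : N2 / L = X / L by rewrite /X /= quotientYidr ?(subset_trans sN2G nLG).
apply: (@qn_minnormal_lift _ (G / L)%G (N1 / L)%G (N2 / L)%G).
- by rewrite quotient_normal.
- apply: contra (proper_subn ltLN1) => /eqP N1b.
  by rewrite -quotient_sub1 ?(subset_trans sN1G nLG) //= N1b.
- move=> Y nsY sY.
  pose Yh := (coset L @*^-1 Y)%G.
  have nsYhG : Yh <| G by rewrite -(quotientGK nsLG) cosetpre_normal.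
  have sLYh : L \subset Yh by rewrite sub_cosetpre.
  have sYhN1 : Yh \subset N1 by rewrite -(quotientGK nsLN1) morphpreS.
  have [eqY | neY] := eqVneq (Yh : {set gT}) N1.
    by right; rewrite -(cosetpreK Y) -/(gval Yh) eqY.
  left.
  have pYh : [&& Yh <| G, K \subset Yh & Yh \proper N1].
    rewrite nsYhG (subset_trans sKL sLYh) properE sYhN1 /=.
    apply/negP => sN1Yh; case/eqP: neY; apply/eqP.
    by rewrite eqEsubset sYhN1.
  have eqYL : Yh :=: L := maxLP Yh pYh sLYh.
  by rewrite -(cosetpreK Y) -/(gval Yh) eqYL trivg_quotient.
- by apply: qn_third => //; rewrite /=.
- by rewrite quotient_normal.
- by rewrite -quotientGI // quotientS1 //= -/K.
- rewrite /= defN2b; apply: qn_third => //; first exact: joing_subr.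
  by apply: qn_quo_mono qN2; rewrite ?joing_subl.
Qed.

End Quo2.

Section Series.
Variable gT : finGroupType.
Implicit Types G H K L M N X Y : {group gT}.

Lemma series_S (A : {set gT}) i :
  Fstar_series A i.+1 = coset (Fstar_series A i) @*^-1 Fstar (A / Fstar_series A i).
Proof. by []. Qed.

Lemma series_group_set (A : {set gT}) i : group_set (Fstar_series A i).
Proof. by case: i => [|i]; [exact: group_set_one | rewrite series_S; exact: groupP]. Qed.
Canonical series_group (A : {set gT}) i := Group (series_group_set A i).

Lemma pre_Fstar_normal G X : X <| G -> coset X @*^-1 Fstar (G / X) <| G.
Proof. by move=> nsXG; rewrite -{2}(quotientGK nsXG) cosetpre_normal Fstar_normal. Qed.

Lemma series_normal G i : Fstar_series G i <| G.
Proof.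
elim: i => [|i IHi]; first exact: normal1.
by rewrite series_S (pre_Fstar_normal (X := series_group G i)).
Qed.


Lemma series_step_normalI G N X : N <| G -> X <| G ->
  coset (X :&: N) @*^-1 Fstar (N / (X :&: N)) = coset X @*^-1 Fstar (G / X) :&: N.
Proof.
move=> nsNG nsXG; have [sNG nNG] := andP nsNG; have [sXG nXG] := andP nsXG.
have nNX : N \subset 'N(X) := subset_trans sNG nXG.
have [f injf imf] := second_isom nNX.
pose B := (coset (X :&: N)%G @*^-1 Fstar (N / (X :&: N)))%G.
have nsYN : X :&: N <| N by rewrite setIC (normalGI sNG nsXG).
have sBN : B \subset N by rewrite -(quotientGK nsYN) morphpreS // Fstar_sub.
have defBb : B / (X :&: N) = Fstar (N / (X :&: N)) by rewrite cosetpreK.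
have hB : B / X = Fstar (G / X) :&: N / X.
  rewrite -imf // defBb injm_Fstar // imf //.
  exact: Fstar_normalI (quotient_normal X nsNG).
have nXB : B \subset 'N(X) := subset_trans sBN nNX.
apply/eqP; rewrite eqEsubset subsetI sBN andbT -sub_morphim_pre //.
rewrite -[coset X @* _]/(gval B / X) hB subsetIl /=.
have : coset X @*^-1 Fstar (G / X) :&: N \subset coset X @*^-1 (B / X).
  rewrite -sub_morphim_pre ?(subset_trans (subsetIr _ _) nNX) //.
  by rewrite setIC morphim_setIpre hB setIC.
rewrite quotientK // => h.
apply: (subset_trans (_ : _ \subset X * B :&: N)); first by rewrite subsetI h subsetIr.
rewrite setIC -group_modr // mul_subG //.
by rewrite setIC -/(gval (X :&: N)%G) sub_cosetpre.
Qed.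

Lemma series_normalI G N i : N <| G -> Fstar_series N i = Fstar_series G i :&: N.
Proof.
move=> nsNG; elim: i => [|i IHi]; first by rewrite /= setI1g.
rewrite !series_S IHi.
exact: (series_step_normalI (X := series_group G i) nsNG (series_normal G i)).
Qed.


Lemma find_cons0 (T : Type) (a : pred T) x s : a x -> find a (x :: s) = 0.
Proof. by move=> ax; rewrite /= ax. Qed.

Lemma series_grow G i : Fstar_series G i != G ->
  Fstar_series G i \proper Fstar_series G i.+1.
Proof.
move=> neXG; pose X := series_group G i.
have nsXG : X <| G := series_normal G i.
have [sXG nXG] := andP nsXG.
have defX : Fstar_series G i = X by [].
rewrite series_S defX properE sub_cosetpre /=.
apply/negP => sPX.
have F1 : Fstar (G / X) = 1.
  apply/trivgP; rewrite /=.
  by rewrite -(cosetpreK (Fstar (G / X))) -(trivg_quotient X) quotientS.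
rewrite defX in neXG.
have ntGX : G / X != 1.
  apply: contra neXG; rewrite -subG1 quotient_sub1 // => sGX.
  by rewrite eqEsubset sXG.
by have := Fstar_ntriv ntGX; rewrite /= F1 eqxx.
Qed.

Lemma series_card G i : (forall j, j <= i -> Fstar_series G j != G) ->
  i < #|Fstar_series G i|.
Proof.
elim: i => [|i IHi] h; first by rewrite cardG_gt0.
have := proper_card (series_grow (h i (leqnSn i))).
by apply: leq_trans; rewrite ltnS IHi // => j lji; apply: h; rewrite (leq_trans lji).
Qed.

Lemma series_sub G i : Fstar_series G i \subset G.
Proof. exact: normal_sub (series_normal G i). Qed.

Lemma hstar_eq G m : Fstar_series G m = G ->
  (forall i, i < m -> Fstar_series G i != G) -> hstar G = m.
Proof.
move=> eqm ltm.
have lemG : m < #|G|.+1.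
  case: m eqm ltm => // m _ ltm; rewrite ltnS.
  have := series_card (fun j (lj : j <= m) => ltm j lj).
  by move/leq_trans; apply; rewrite subset_leq_card ?series_sub.
rewrite /hstar -(subnKC (ltnW lemG)) iotaD find_cat.
have -> : has (fun i => Fstar_series G i == G) (iota 0 m) = false.
  apply/hasPn => i; rewrite mem_iota add0n => /andP[_ lim].
  exact: ltm.
rewrite size_iota add0n subSn; last by rewrite -ltnS.
have -> : iota m (#|G| - m).+1 = m :: iota m.+1 (#|G| - m) by [].
rewrite find_cons0 ?addn0 //.
by apply/eqP; exact: eqm.
Qed.

Lemma hstar_spec G : Fstar_series G (hstar G) = G /\ (forall i, i < hstar G -> Fstar_series G i != G).
Proof.
have ex : exists i, Fstar_series G i == G.
  have [/hasP[i _ /eqP ei] | /hasPn hn] := boolP (has (fun i => Fstar_series G i == G) (iota 0 #|G|.+1)).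
    by exists i; rewrite ei.
  exfalso; have : #|G| < #|Fstar_series G #|G| |.
    by apply: series_card => j lj; apply: hn; rewrite mem_iota add0n ltnS.
  by rewrite ltnNge subset_leq_card ?series_sub.
case: (ex_minnP ex) => m /eqP em minm.
have ltm : forall i, i < m -> Fstar_series G i != G.
  by move=> i lim; apply/negP => /minm; rewrite leqNgt lim.
by rewrite (hstar_eq em ltm).
Qed.


Lemma qn_residual_spec H : exists R : {group gT},
  [/\ qn_residual H = R, R <| H, quasinilpotent (H / R) &
      forall N : {group gT}, N <| H -> quasinilpotent (H / N) -> R \subset N].
Proof.
have PH : (H <| H) && quasinilpotent (H / H).
  by rewrite normal_refl trivg_quotient qn1.
have minR : forall N : {group gT}, N <| H -> quasinilpotent (H / N) ->
    qn_residual H \subset N.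
  by move=> N nsN qN; apply: (bigcap_inf N); rewrite nsN qN.
have sRH : qn_residual H \subset H := minR H (normal_refl H) (andP PH).2.
have : (qn_residual H = setT) \/ exists2 R : {group gT}, qn_residual H = R &
         (R <| H) && quasinilpotent (H / R).
  rewrite /qn_residual; apply: (@big_ind {set gT} (fun X : {set gT} => (X = setT) \/
       exists2 R : {group gT}, X = R & (R <| H) && quasinilpotent (H / R))).
  - by left.
  - move=> X Y [-> | [R1 -> /andP[nsR1 qR1]]] [-> | [R2 -> /andP[nsR2 qR2]]].
    + by left; rewrite setIT.
    + by right; exists R2; rewrite ?setTI // nsR2 qR2.
    + by right; exists R1; rewrite ?setIT // nsR1 qR1.
    + right; exists (R1 :&: R2)%G => //.
      by rewrite normalI // qn_quo_meet.
  - by move=> N PN; right; exists N.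
case=> [RT | [R defR PR]].
  exists H; split.
  - by apply/eqP; rewrite eqEsubset sRH RT subsetT.
  - exact: normal_refl.
  - exact: (andP PH).2.
  - by move=> N nsN qN; apply: subset_trans (minR N nsN qN); rewrite RT subsetT.
exists R; case/andP: PR => nsR qR; split => //.
by move=> N nsN qN; rewrite -defR minR.
Qed.

End Series.

Unset Implicit Arguments.

Theorem lemma2 (gT : finGroupType) (H : {group gT}) :
  H :!=: 1 -> hstar (qn_residual H) = (hstar H).-1.
Proof.
move=> ntH.
have [R [defR nsRH qR minR]] := qn_residual_spec H.
rewrite defR.
have [eqh lth] := hstar_spec H.
set h := hstar H in eqh lth *.
have h_gt0 : 0 < h.
  rewrite lt0n; apply/eqP => h0; move: eqh; rewrite h0 => /= H1.
  by rewrite -H1 eqxx in ntH.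
pose X := series_group H h.-1.
have nsXH : X <| H := series_normal H h.-1.
have qX : quasinilpotent (H / X).
  have e : Fstar_series H h = coset X @*^-1 Fstar (H / X).
    by rewrite -(prednK h_gt0) series_S.
  rewrite /quasinilpotent -{2}eqh e cosetpreK.
  exact: eqxx.
have sRX : R \subset X := minR X nsXH qX.
have eqR1 : Fstar_series R h.-1 = R.
  by rewrite (series_normalI _ nsRH) -/(gval X) (setIidPr sRX).
have [eqm ltm] := hstar_spec R.
set m := hstar R in eqm ltm *.
have le1 : m <= h.-1.
  rewrite leqNgt; apply/negP => /ltm; rewrite eqR1 eqxx; by [].
have le2 : h <= m.+1.
  rewrite leqNgt; apply/negP => /lth.
  pose Y := series_group H m.
  have nsYH : Y <| H := series_normal H m.
  have sRY : R \subset Y.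
    by rewrite -eqm (series_normalI _ nsRH) subsetIl.
  have qY : quasinilpotent (H / Y) := qn_quo_mono sRY nsRH nsYH qR.
  rewrite series_S -/(gval Y) (eqP qY) (quotientGK nsYH) eqxx; by [].
by apply/eqP; rewrite eqn_leq le1 -ltnS (leq_trans _ le2) // prednK.
Qed.
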